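(* Let $S_1(x),\dots,S_n(x) \in \mathbb{C}\{\!\{x\}\!\}$ be Puiseux series with nonnegative valuations. Then \[ \operatorname{val}\bigl(S_1(x)+\dots+S_n(x)\bigr) \le \frac{n(n-1)}{2} + \operatorname{val}\Bigl(W\bigl(S_1(x),\dots,S_n(x)\bigr)\Bigr). \]
   Context: A Puiseux series is a formal series $S(x)=\sum_{i\ge 1} c_i x^{\lambda_i}$ (finite or infinite) with nonzero complex coefficients $c_i$ and a strictly increasing sequence of rational exponents $\lambda_i$ having a common denominator, or the empty series $0$; they form a field $\mathbb{C}\{\!\{x\}\!\}$ under the usual operations. The valuation is $\operatorname{val}(S)=\lambda_1$ and $\operatorname{val}(0)=+\infty$. The formal derivative is $\frac{\partial S}{\partial x}(x)=\sum_i \lambda_i c_i x^{\lambda_i-1}$, and $\frac{\partial^k S}{\partial x^k}$ denotes the $k$-th iterated derivative ($0$-th derivative is $S$). The Wronskian $W(S_1,\dots,S_n)$ is the determinant of the $n\times n$ matrix whose $(i,j)$ entry is $\frac{\partial^{i-1} S_j}{\partial x^{i-1}}(x)$, for $1\le i,j\le n$. *)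

(* Defs.v *)
(* Puiseux series over an algebraically closed numeric field R
   (C is the intended instance).  A finite family of Puiseux
   series always has a common denominator d, so we represent series with
   exponents in (1/d)Z:  S = sum_{k>=0} pcoef S k * x^((pshift S + k)/d). *)
From HB Require Import structures.
From mathcomp Require Import all_boot all_order all_algebra all_fingroup.
From Stdlib Require Import ClassicalEpsilon.
Set Implicit Arguments.
Unset Strict Implicit.
Unset Printing Implicit Defensive.
Import Order.TTheory GRing.Theory Num.Theory.
Local Open Scope ring_scope.

Record pser (R : Type) := PSer { pshift : int; pcoef : nat -> R }.

Section Puiseux.
Variable R : numClosedFieldType.
Variable d : nat. (* common denominator of exponents, d > 0 *)

(* coefficient of x^(m/d) *)
Definition coefZ (S : pser R) (m : int) : R :=
  match (m - pshift S)%R with Posz k => pcoef S k | Negz _ => 0 end.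

Definition pzero : pser R := PSer 0 (fun _ => 0).
Definition pone : pser R := PSer 0 (fun k => (k == 0%N)%:R).

Definition padd (S T : pser R) : pser R :=
  let m := if pshift S <= pshift T then pshift S else pshift T in
  PSer m (fun k => coefZ S (m + k%:Z) + coefZ T (m + k%:Z)).

Definition pscale (c : R) (S : pser R) : pser R :=
  PSer (pshift S) (fun k => c * pcoef S k).

Definition pmul (S T : pser R) : pser R :=
  PSer (pshift S + pshift T)
       (fun k => \sum_(i < k.+1) pcoef S i * pcoef T (k - i)%N).

(* formal derivative d/dx:  x^((s+k)/d) |-> ((s+k)/d) x^((s+k-d)/d) *)
Definition pderiv (S : pser R) : pser R :=
  PSer (pshift S - d%:Z)
       (fun k => ((pshift S + k%:Z)%:~R / d%:R) * pcoef S k).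

Definition pderivn (k : nat) (S : pser R) : pser R := iter k pderiv S.

(* Wronskian: det of the matrix with (i,j) entry pderivn i (S j),
   via the Leibniz formula  sum_s (-1)^s prod_i A i (s i). *)
Definition ps_wronskian (n : nat) (S : 'I_n -> pser R) : pser R :=
  \big[padd/pzero]_(s : 'S_n)
     pscale ((-1) ^+ s) (\big[pmul/pone]_(i < n) pderivn i (S (s i))).

Definition ps_sum (n : nat) (S : 'I_n -> pser R) : pser R :=
  \big[padd/pzero]_(i < n) S i.

(* valuation, None = +infinity *)
Definition ps_val (S : pser R) : option rat :=
  match excluded_middle_informative (exists k, pcoef S k != 0) with
  | left H => Some ((pshift S + (ex_minn H)%:Z)%:~R / d%:R)
  | right _ => None
  end.

End Puiseux.

Definition ext_le (a b : option rat) : bool :=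
  match a, b with
  | _, None => true
  | None, Some _ => false
  | Some x, Some y => (x <= y)%R
  end.

Definition ext_addc (c : rat) (a : option rat) : option rat :=
  omap (fun v => (c + v)%R) a.

(* Main.v *)
Require Import Defs.
From HB Require Import structures.
From mathcomp Require Import all_boot all_order all_algebra all_fingroup zify ring.
Set Implicit Arguments. Unset Strict Implicit. Unset Printing Implicit Defensive.
Import Order.TTheory GRing.Theory Num.Theory.
Local Open Scope ring_scope.

Section H.
Variable R : numClosedFieldType.
Notation cz := (@Defs.coefZ R).

Lemma cz_lt (X : pser R) m : m < pshift X -> cz X m = 0.
Proof.
rewrite /Defs.coefZ => h; case E: (m - pshift X) => [k|k] //.
exfalso; have : 0 <= m - pshift X by rewrite E. lia.
Qed.

Lemma cz_shift (X : pser R) (i : nat) : cz X (pshift X + i%:Z) = pcoef X i.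
Proof. by rewrite /Defs.coefZ (addrC (pshift X)) addrK. Qed.

Lemma cz_ge (X : pser R) m (k : nat) : m = pshift X + k%:Z -> cz X m = pcoef X k.
Proof. by move=> ->; rewrite cz_shift. Qed.

Lemma int_split (m b : int) : b <= m -> exists k : nat, m = b + k%:Z.
Proof. move=> h; exists (absz (m - b)); lia. Qed.

Lemma cz_add (X Y : pser R) m : cz (padd X Y) m = cz X m + cz Y m.
Proof.
rewrite /padd; set mn := (if _ then _ else _).
have h1 : mn <= pshift X by rewrite /mn; case: ifP => //; lia.
have h2 : mn <= pshift Y by rewrite /mn; case: ifP => //; lia.
case: (ltrP m mn) => h.
  rewrite cz_lt //= cz_lt; last lia. rewrite cz_lt; last lia. by rewrite addr0.
have [k ->] := int_split h.
by rewrite (cz_ge (X := PSer mn _) (k := k)).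
Qed.

Lemma cz_scale c (X : pser R) m : cz (pscale c X) m = c * cz X m.
Proof. rewrite /Defs.coefZ /=; case: (m - pshift X) => k //; by rewrite mulr0. Qed.

Lemma cz_zero m : cz (@pzero R) m = 0.
Proof. by rewrite /Defs.coefZ; case: (m - _). Qed.

Lemma cz_one m : cz (@pone R) m = (m == 0)%:R.
Proof. rewrite /Defs.coefZ /= subr0; case: m => k //. Qed.

Lemma cz_mul (X Y : pser R) (K : nat) :
  cz (pmul X Y) (pshift X + pshift Y + K%:Z) =
  \sum_(i < K.+1) cz X (pshift X + i%:Z) * cz Y (pshift X + pshift Y + K%:Z - (pshift X + i%:Z)).
Proof.
rewrite (cz_ge (X := pmul X Y) (k := K)) //=.
apply: eq_bigr => i _; rewrite cz_shift; congr (_ * _).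
rewrite (cz_ge (k := (K - i)%N)) //.
have := ltn_ord i; lia.
Qed.

Variable d : nat.
Lemma cz_deriv (X : pser R) m :
  cz (pderiv d X) m = ((m + d%:Z)%:~R / d%:R) * cz X (m + d%:Z).
Proof.
case: (ltrP (m + d%:Z) (pshift X)) => h.
  rewrite !cz_lt ?mulr0 //=; lia.
have [k E] := int_split h.
rewrite (cz_ge (k := k)) /=; last lia.
by rewrite (cz_ge (k := k)) // -E.
Qed.

Lemma sum_window1 (F : int -> R) (L L1 : int) (K K1 : nat) :
  L <= L1 -> L1 + K1%:Z <= L + K%:Z ->
  (forall a, F a != 0 -> (L1 <= a) && (a <= L1 + K1%:Z)) ->
  \sum_(i < K.+1) F (L + i%:Z) = \sum_(i < K1.+1) F (L1 + i%:Z).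
Proof.
move=> h1 h2 hF.
have z a : ~~ ((L1 <= a) && (a <= L1 + K1%:Z)) -> F a = 0.
  by move=> ha; apply/eqP; apply: contraNT ha => /hF.
set t := absz (L1 - L)%R.
have tK : (t + K1 <= K)%N by rewrite /t; lia.
rewrite -!(big_mkord xpredT (fun i : nat => F (_ + i%:Z))).
rewrite (big_cat_nat (n := t)) //=; last lia.
rewrite big_nat big1 ?add0r; last first.
  move=> i /andP[_ hi]; apply: z; rewrite /t in hi; lia.
rewrite -{1}(add0n t) big_addn.
rewrite (big_cat_nat (n := K1.+1)) //=; last lia.
have -> : \sum_(K1.+1 <= i < K.+1 - t) F (L + (i + t)%N%:Z) = 0.
  rewrite big_nat big1 // => i /andP[hi _]; apply: z; rewrite /t; lia.
rewrite addr0.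
apply: eq_bigr => i _; congr F; rewrite /t; lia.
Qed.

Lemma sum_window (F : int -> R) (L1 L2 : int) (K1 K2 : nat) :
  (forall a, F a != 0 -> [&& L1 <= a, a <= L1 + K1%:Z, L2 <= a & a <= L2 + K2%:Z]) ->
  \sum_(i < K1.+1) F (L1 + i%:Z) = \sum_(i < K2.+1) F (L2 + i%:Z).
Proof.
move=> hF; set t := absz (L1 - L2)%R.
rewrite -(@sum_window1 F (L1 - t%:Z) L1 (2 * t + K1 + K2) K1); first last.
- by move=> a /hF; lia.
- rewrite /t; lia.
- lia.
rewrite (@sum_window1 F (L1 - t%:Z) L2 (2 * t + K1 + K2) K2) //.
- rewrite /t; lia.
- rewrite /t; lia.
- by move=> a /hF; lia.
Qed.

Definition lb (X : pser R) (b : int) := forall m, m < b -> cz X m = 0.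
Definition agree (b : int) (T : nat) (X : pser R) (p : {poly R}) :=
  lb X b /\ forall k, (k < T)%N -> cz X (b + k%:Z) = p`_k.

Lemma agree_mul b1 b2 T X Y p q : agree b1 T X p -> agree b2 T Y q ->
  agree (b1 + b2) T (pmul X Y) (p * q).
Proof.
move=> [l1 a1] [l2 a2].
set F := fun m a => cz X a * cz Y (m - a).
have key m : cz (pmul X Y) m = if m < pshift X + pshift Y then 0 else
    \sum_(i < (absz (m - pshift X - pshift Y)%R).+1) F m (pshift X + i%:Z).
  case: ifP => h; first by rewrite cz_lt.
  set K := absz (m - pshift X - pshift Y)%R.
  have E : m = pshift X + pshift Y + K%:Z by rewrite /K; lia.
  rewrite {1}E cz_mul; apply: eq_bigr => i _; rewrite /F -E //.
have Fnz m a : F m a != 0 -> [&& pshift X <= a, a <= m - pshift Y, b1 <= a & a <= m - b2].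
  rewrite /F => h.
  have hx : cz X a != 0 by apply: contraNneq h => ->; rewrite mul0r.
  have hy : cz Y (m - a) != 0 by apply: contraNneq h => ->; rewrite mulr0.
  have c1 : pshift X <= a by case: (ltrP a (pshift X)) => // /cz_lt hz; by rewrite hz eqxx in hx.
  have c2 : pshift Y <= m - a by case: (ltrP (m - a) (pshift Y)) => // /cz_lt hz; by rewrite hz eqxx in hy.
  have c3 : b1 <= a by case: (ltrP a b1) => // /l1 hz; by rewrite hz eqxx in hx.
  have c4 : b2 <= m - a by case: (ltrP (m - a) b2) => // /l2 hz; by rewrite hz eqxx in hy.
  apply/and4P; split; lia.
split.
  move=> m hm; rewrite key; case: ifP => // _; apply: big1 => i _.
  apply/eqP; apply: contraT => /Fnz; lia.
move=> k hk; rewrite key coefM.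
have e : \sum_(j < k.+1) p`_j * q`_(k - j) = \sum_(j < k.+1) F (b1 + b2 + k%:Z) (b1 + j%:Z).
  apply: eq_bigr => j _; have hj := ltn_ord j.
  rewrite /F -a1; last lia. rewrite -a2; last lia. congr (_ * cz Y _); lia.
rewrite e; case: ifP => h.
  rewrite big1 // => j _; apply/eqP; apply: contraT => /Fnz; lia.
apply: sum_window => a /Fnz; lia.
Qed.

Lemma agree_eqb b b' T X p : b = b' -> agree b T X p -> agree b' T X p.
Proof. by move=> ->. Qed.

Lemma agree_add b T X Y p q : agree b T X p -> agree b T Y q -> agree b T (padd X Y) (p + q).
Proof.
move=> [l1 a1] [l2 a2]; split.
  by move=> m hm; rewrite cz_add l1 // l2 // addr0.
by move=> k hk; rewrite cz_add a1 // a2 // coefD.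
Qed.

Lemma agree_scale b T c X p : agree b T X p -> agree b T (pscale c X) (c *: p).
Proof.
move=> [l a]; split; first by move=> m hm; rewrite cz_scale l // mulr0.
by move=> k hk; rewrite cz_scale a // coefZ.
Qed.

Lemma agree_zero b T : agree b T (@pzero R) 0.
Proof. by split => [m _|k _]; rewrite cz_zero ?coef0. Qed.

Lemma agree_one T : agree 0 T (@pone R) 1.
Proof.
split => [m hm|k _]; rewrite cz_one ?coef1.
  by case: eqP => // E; move: hm; rewrite E ltxx.
by rewrite add0r.
Qed.

Lemma agree_prod (I : Type) (r : seq I) (F : I -> pser R) (p : I -> {poly R}) (b : I -> int) T :
  (forall i, agree (b i) T (F i) (p i)) ->
  agree (\sum_(i <- r) b i) T (\big[@pmul R/@pone R]_(i <- r) F i) (\prod_(i <- r) p i).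
Proof.
move=> h; elim: r => [|x r IH]; first by rewrite !big_nil; apply: agree_one.
by rewrite !big_cons; apply: agree_mul.
Qed.

Lemma agree_bigadd (I : Type) (r : seq I) (P : pred I) (F : I -> pser R) (p : I -> {poly R}) b T :
  (forall i, agree b T (F i) (p i)) ->
  agree b T (\big[@padd R/@pzero R]_(i <- r | P i) F i) (\sum_(i <- r | P i) p i).
Proof.
move=> h; apply: (big_ind2 (fun X q => agree b T X q)) => //.
  exact: agree_zero.
by move=> *; apply: agree_add.
Qed.

Definition dpoly T (b : int) (p : {poly R}) : {poly R} :=
  \poly_(k < T) (((b + k%:Z)%:~R / d%:R) * p`_k).

Lemma agree_deriv b T X p : agree b T X p -> agree (b - d%:Z) T (pderiv d X) (dpoly T b p).
Proof.
move=> [l a]; split.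
  by move=> m hm; rewrite cz_deriv l ?mulr0 //; lia.
move=> k hk; rewrite cz_deriv coef_poly hk.
have -> : b - d%:Z + k%:Z + d%:Z = b + k%:Z by lia.
by rewrite a.
Qed.

Fixpoint Dn T (i : nat) (p : {poly R}) : {poly R} :=
  if i is i'.+1 then dpoly T (- (d * i')%N%:Z) (Dn T i' p) else p.

Lemma agree_derivn T i X p : agree 0 T X p ->
  agree (- (d * i)%N%:Z) T (pderivn d i X) (Dn T i p).
Proof.
move=> h; elim: i => [|i IH] /=; first by apply: agree_eqb h; lia.
apply: agree_eqb (agree_deriv IH); lia.
Qed.

Lemma dpoly_add T b p q : dpoly T b (p + q) = dpoly T b p + dpoly T b q.
Proof. by apply/polyP => k; rewrite coefD !coef_poly; case: ifP; rewrite ?addr0 // coefD mulrDr. Qed.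
Lemma dpoly0 T b : dpoly T b 0 = 0.
Proof. by apply/polyP => k; rewrite coef0 coef_poly coef0 mulr0; case: ifP. Qed.
Lemma Dn_add T i p q : Dn T i (p + q) = Dn T i p + Dn T i q.
Proof. by elim: i => //= i ->; rewrite dpoly_add. Qed.
Lemma Dn0 T i : Dn T i 0 = 0.
Proof. by elim: i => //= i ->; rewrite dpoly0. Qed.

Definition low (v : nat) (p : {poly R}) := forall k, (k < v)%N -> p`_k = 0.

Lemma low_mul v p q : low v q -> low v (p * q).
Proof.
move=> h k hk; rewrite coefM big1 // => j _; rewrite h ?mulr0 //.
by apply: leq_ltn_trans hk; apply: leq_subr.
Qed.

Lemma low_sum v (I : Type) (r : seq I) (F : I -> {poly R}) :
  (forall i, low v (F i)) -> low v (\sum_(i <- r) F i).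
Proof.
move=> h k hk; rewrite coef_sum big1 // => i _; exact: h.
Qed.

Lemma low_Dn v T i p : low v p -> low v (Dn T i p).
Proof.
elim: i => //= i IH h k hk; rewrite coef_poly IH // mulr0; by case: ifP.
Qed.

Lemma det_low n (M : 'M[{poly R}]_n) v (i0 : 'I_n) :
  (forall i, low v (\sum_j M i j)) -> low v (\det M).
Proof.
move=> h.
set ones := (const_mx 1 : 'cV[{poly R}]_n).
have E : (\adj M *m (M *m ones)) i0 0 = \det M.
  by rewrite mulmxA mul_adj_mx mul_scalar_mx !mxE mulr1.
rewrite -E mxE; apply: low_sum => j; apply: low_mul.
rewrite mxE; have -> : \sum_j0 M j j0 * ones j0 0 = \sum_j0 M j j0.
  by apply: eq_bigr => k _; rewrite mxE mulr1.
exact: h.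
Qed.

Lemma val_spec (X : pser R) :
  (ps_val d X = None /\ forall m, cz X m = 0) \/
  (exists m0, ps_val d X = Some (m0%:~R / d%:R) /\ cz X m0 != 0 /\ lb X m0).
Proof.
rewrite /ps_val; case: ClassicalEpsilon.excluded_middle_informative => H.
  right; exists (pshift X + (ex_minn H)%:Z); split => //.
  case: ex_minnP => k hk hmin; rewrite cz_shift; split => // m hm.
  case: (ltrP m (pshift X)) => h; first exact: cz_lt.
  have [j E] := int_split h; rewrite (cz_ge E).
  apply/eqP; apply: contraT => /hmin; lia.
left; split => // m.
case: (ltrP m (pshift X)) => h; first exact: cz_lt.
have [j E] := int_split h; rewrite (cz_ge E).
apply/eqP; apply: contraT => hj; exfalso; apply: H; by exists j.
Qed.

Lemma cz_sum n (S : 'I_n -> pser R) m : cz (ps_sum S) m = \sum_j cz (S j) m.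
Proof.
rewrite /ps_sum; apply: (big_morph (fun X => cz X m)) => [X Y|]; [exact: cz_add| exact: cz_zero].
Qed.

Lemma W_lb n (S : 'I_n -> pser R) (i0 : 'I_n) : (forall j, lb (S j) 0) ->
  forall v : nat, lb (ps_sum S) v%:Z ->
  lb (ps_wronskian d S) (v%:Z - (d * \sum_(i < n) i)%N%:Z).
Proof.
move=> hS v hv.
set T := v.
pose P j := \poly_(k < T) cz (S j) k%:Z.
have aP j : agree 0 T (S j) (P j).
  split; first exact: hS.
  by move=> k hk; rewrite coef_poly hk add0r.
pose M := \matrix_(i < n, j < n) Dn T i (P j).
have hb : \sum_(i < n) (- (d * i)%N%:Z) = - (d * \sum_(i < n) i)%N%:Z.
  rewrite sumrN; congr (- _); rewrite big_distrr /=.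
  by apply/esym/(big_morph Posz).
have aW : agree (- (d * \sum_(i < n) i)%N%:Z) T (ps_wronskian d S) (\det M).
  rewrite /ps_wronskian /determinant; apply: agree_bigadd => s.
  rewrite mulr_sign -scaler_sign; apply: agree_scale.
  rewrite -hb; apply: agree_prod => i; rewrite mxE; exact: agree_derivn.
have lowM : low v (\det M).
  apply: (det_low i0) => i.
  have -> : \sum_j M i j = Dn T i (\sum_j P j).
    rewrite (big_morph (Dn T i) (Dn_add T i) (Dn0 T i)); apply: eq_bigr => j _; by rewrite mxE.
  apply: low_Dn => k hk; rewrite coef_sum.
  have -> : \sum_j (P j)`_k = cz (ps_sum S) k%:Z.
    by rewrite cz_sum; apply: eq_bigr => j _; rewrite coef_poly (hk : (k < T)%N).
  apply: hv; lia.
case: aW => lW aW m hm.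
case: (ltrP m (- (d * \sum_(i < n) i)%N%:Z)) => h; first exact: lW.
have [k E] := int_split h.
rewrite E aW; last by rewrite /T; lia.
apply: lowM; lia.
Qed.
End H.

Theorem mainTheorem2 (R : numClosedFieldType) (d n : nat) (hd : (0 < d)%N)
  (hn : (0 < n)%N) (S : 'I_n -> pser R)
  (hS : forall i, ext_le (Some 0) (ps_val d (S i))) :
  ext_le (ps_val d (ps_sum S))
    (ext_addc ((n * (n - 1))%:R / 2%:R) (ps_val d (ps_wronskian d S))).
Proof.
have dpos : (0 : rat) < d%:R by rewrite ltr0n.
have hS0 j : lb (S j) 0.
  case: (val_spec d (S j)) => [[_ hz] m _|[m0 [E [_ l]]]]; first exact: hz.
  move: (hS j); rewrite E /= pmulr_lge0 ?invr_gt0 // ler0z => h0 m hm; apply: l; lia.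
have hsum0 : lb (ps_sum S) 0.
  by move=> m hm; rewrite cz_sum big1 // => j _; exact: hS0.
set N := (\sum_(i < n) i)%N.
have gen k : (2 * \sum_(i < k) i = k * (k - 1))%N.
  elim: k => [|k IH]; first by rewrite big_ord0.
  rewrite big_ord_recr /= mulnDr IH; case: k {IH} => // k; nia.
have hN : (n * (n - 1))%:R / 2%:R = N%:R :> rat.
  by rewrite -gen natrM mulrC mulKf // pnatr_eq0.
set i0 := Ordinal hn.
case: (val_spec d (ps_wronskian d S)) => [[EW _]|[w0 [EW [hw _]]]].
  by rewrite EW; case: ps_val.
case: (val_spec d (ps_sum S)) => [[Es hz]|[s0 [Es [hs ls]]]].
  exfalso; move: hw.
  have := @W_lb R d n S i0 hS0 (absz (w0 + (d * N)%N%:Z)%R).+1 (fun m _ => hz m).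
  by move=> /(_ w0) ->; [rewrite eqxx | lia].
have s0ge : 0 <= s0.
  case: (ltrP s0 0) => // /hsum0 h; by rewrite h eqxx in hs.
have := @W_lb R d n S i0 hS0 (absz s0) (fun m hm => ls m (ltac:(lia))).
move=> hW.
have w0ge : s0 - (d * N)%N%:Z <= w0.
  case: (ltrP w0 (s0 - (d * N)%N%:Z)) => // h.
  by rewrite hW ?eqxx in hw; lia.
rewrite Es EW /= hN.
have : (s0%:~R : rat) <= ((d * N)%N%:Z + w0)%:~R by rewrite ler_int; lia.
rewrite intrD => h.
have dinv : (0 : rat) <= d%:R^-1 by rewrite invr_ge0 ltW.
have := ler_wpM2r dinv h.
move=> h2; apply: (le_trans h2).
have e : ((d * N)%N%:~R : rat) = d%:R * N%:R by rewrite -natrM.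
rewrite e mulrDl mulrC mulrA mulVf ?mul1r //; by rewrite gt_eqF.
Qed.
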